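(* Let $\mathsf E$ be a completely unsharp observable on $\mathcal H_S$, and let $\mathcal I$ be an $\mathsf E$-instrument with the following property: for every full-rank state $\rho$ on $\mathcal H_S$ and every outcome $x$, the operator $\mathcal I_x(\rho)$ is positive definite. Then $\mathcal I$ is implemented by some measurement scheme constrained by the third law.
   Context: All Hilbert spaces are finite-dimensional and complex. A state is a positive operator of unit trace; it is full-rank if it is positive definite. A channel is a completely positive trace-preserving linear map. A channel is constrained by the third law if it maps every full-rank state on its input space to a full-rank state on its output space. Let $2\le\dim\mathcal H_S<\infty$. An observable is a finite family $\mathsf E=\{\mathsf E_x\}_{x\in\mathcal X}$ of nonzero operators with $0\le\mathsf E_x\le\mathbb 1$ and $\sum_x\mathsf E_x=\mathbb 1$. It is completely unsharp if, for every $x$, the spectrum of $\mathsf E_x$ contains neither $0$ nor $1$. An $\mathsf E$-instrument is a family $\{\mathcal I_x\}_{x\in\mathcal X}$ of completely positive maps on $\mathcal L(\mathcal H_S)$ with $\mathrm{tr}[\mathcal I_x(\rho)]=\mathrm{tr}[\mathsf E_x\rho]$ for all $x$ and all states $\rho$. A measurement scheme $(\mathcal H_A,\xi,\mathcal E,\mathsf Z)$ consists of: - a finite-dimensional $\mathcal H_A$; - a state $\xi$ on $\mathcal H_A$; - a channel $\mathcal E$ on $\mathcal L(\mathcal H_S\otimes\mathcal H_A)$; - positive operators $\{\mathsf Z_x\}_{x\in\mathcal X}$ on $\mathcal H_A$ summing to $\mathbb 1$. It implements $\mathcal I_x(\rho)=\mathrm{tr}_A[(\mathbb 1\otimes\mathsf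 Z_x)\mathcal E(\rho\otimes\xi)]$. It is constrained by the third law if $\xi$ is full-rank and $\mathcal E$ is constrained by the third law. *)

(* Defs.v *)
From HB Require Import structures.
From mathcomp Require Import all_boot all_order all_algebra.
From mathcomp Require Import complex mxtens.
From mathcomp Require Import reals.
Set Implicit Arguments. Unset Strict Implicit. Unset Printing Implicit Defensive.
Import Order.TTheory GRing.Theory Num.Theory.
Local Open Scope ring_scope.

Section QDefs.
Variable C : numClosedFieldType.

Definition adjmx (p q : nat) (A : 'M[C]_(p, q)) : 'M[C]_(q, p) :=
  (map_mx (fun z => z^*) A)^T.

Definition posop (n : nat) (A : 'M[C]_n) : Prop :=
  adjmx A = A /\ forall v : 'cV[C]_n, 0 <= (adjmx v *m A *m v) 0 0.

Definition posdef (n : nat) (A : 'M[C]_n) : Prop :=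
  adjmx A = A /\ forall v : 'cV[C]_n, v != 0 -> 0 < (adjmx v *m A *m v) 0 0.

Definition is_state (n : nat) (rho : 'M[C]_n) : Prop := posop rho /\ \tr rho = 1.

Definition fullrank_state (n : nat) (rho : 'M[C]_n) : Prop :=
  is_state rho /\ posdef rho.

Definition linmap (n m : nat) (f : 'M[C]_n -> 'M[C]_m) : Prop :=
  forall (a : C) (A B : 'M[C]_n), f (a *: A + B) = a *: f A + f B.

(* ampliation id_k (x) f acting on L(C^k (x) C^n) *)
Definition ampl (k n m : nat) (f : 'M[C]_n -> 'M[C]_m) (X : 'M[C]_(k * n))
  : 'M[C]_(k * m) :=
  \matrix_(r, s)
    f (\matrix_(i, j) X (mxtens_index ((mxtens_unindex r).1, i))
                         (mxtens_index ((mxtens_unindex s).1, j)))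
      (mxtens_unindex r).2 (mxtens_unindex s).2.

Definition completely_positive (n m : nat) (f : 'M[C]_n -> 'M[C]_m) : Prop :=
  linmap f /\ forall (k : nat) (X : 'M[C]_(k * n)), posop X -> posop (ampl f X).

Definition trace_preserving (n m : nat) (f : 'M[C]_n -> 'M[C]_m) : Prop :=
  forall A : 'M[C]_n, \tr (f A) = \tr A.

Definition channel (n m : nat) (f : 'M[C]_n -> 'M[C]_m) : Prop :=
  completely_positive f /\ trace_preserving f.

Definition third_law_channel (n m : nat) (f : 'M[C]_n -> 'M[C]_m) : Prop :=
  forall rho : 'M[C]_n, fullrank_state rho -> fullrank_state (f rho).

Definition observable (n : nat) (X : finType) (E : X -> 'M[C]_n) : Prop :=
  [/\ forall x, E x != 0,
      forall x, posop (E x),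
      forall x, posop (1%:M - E x)
    & \sum_(x : X) E x = 1%:M].

Definition completely_unsharp (n : nat) (X : finType) (E : X -> 'M[C]_n) : Prop :=
  forall x, ~ eigenvalue (E x) 0 /\ ~ eigenvalue (E x) 1.

Definition instrument (n : nat) (X : finType) (E : X -> 'M[C]_n)
  (I : X -> 'M[C]_n -> 'M[C]_n) : Prop :=
  (forall x, completely_positive (I x)) /\
  (forall x (rho : 'M[C]_n), is_state rho -> \tr (I x rho) = \tr (E x *m rho)).

(* partial trace over the second (ancilla) factor *)
Definition ptrA (n m : nat) (M : 'M[C]_(n * m)) : 'M[C]_n :=
  \matrix_(i, j) \sum_(k < m) M (mxtens_index (i, k)) (mxtens_index (j, k)).

Definition meas_scheme (n m : nat) (X : finType) (xi : 'M[C]_m)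
  (Ech : 'M[C]_(n * m) -> 'M[C]_(n * m)) (Z : X -> 'M[C]_m) : Prop :=
  [/\ is_state xi, channel Ech, forall x, posop (Z x) & \sum_(x : X) Z x = 1%:M].

Definition implements (n m : nat) (X : finType) (xi : 'M[C]_m)
  (Ech : 'M[C]_(n * m) -> 'M[C]_(n * m)) (Z : X -> 'M[C]_m)
  (I : X -> 'M[C]_n -> 'M[C]_n) : Prop :=
  forall x (A : 'M[C]_n),
    I x A = ptrA ((1%:M *t Z x) *m Ech (A *t xi)).

Definition third_law_scheme (n m : nat) (xi : 'M[C]_m)
  (Ech : 'M[C]_(n * m) -> 'M[C]_(n * m)) : Prop :=
  posdef xi /\ third_law_channel Ech.

End QDefs.

(* Main.v *)
Require Import Defs.
From HB Require Import structures.
From mathcomp Require Import all_boot all_order all_algebra.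
From mathcomp Require Import complex mxtens.
From mathcomp Require Import reals.
From mathcomp Require Import ring.
Import Order.TTheory GRing.Theory Num.Theory.
Local Open Scope ring_scope.
Set Implicit Arguments. Unset Strict Implicit. Unset Printing Implicit Defensive.
Section Gen.
Variable C : numClosedFieldType.

Lemma adjmxE p q (A : 'M[C]_(p,q)) i j : adjmx A i j = (A j i)^*.
Proof. by rewrite /adjmx !mxE. Qed.

Lemma adjmxK p q (A : 'M[C]_(p,q)) : adjmx (adjmx A) = A.
Proof. by apply/matrixP=> i j; rewrite !adjmxE conjCK. Qed.

Lemma adjmx_mul p q r (A : 'M[C]_(p,q)) (B : 'M[C]_(q,r)) :
  adjmx (A *m B) = adjmx B *m adjmx A.
Proof.
apply/matrixP=> i j; rewrite adjmxE !mxE rmorph_sum; apply: eq_bigr=> k _.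
by rewrite !adjmxE rmorphM mulrC.
Qed.

Lemma adjmxD p q (A B : 'M[C]_(p,q)) : adjmx (A + B) = adjmx A + adjmx B.
Proof. by apply/matrixP=> i j; rewrite !(adjmxE, mxE) rmorphD. Qed.

Lemma adjmxZ p q a (A : 'M[C]_(p,q)) : adjmx (a *: A) = a^* *: adjmx A.
Proof. by apply/matrixP=> i j; rewrite !(adjmxE, mxE) rmorphM. Qed.

Lemma adjmx_sum p q (I : finType) (F : I -> 'M[C]_(p,q)) :
  adjmx (\sum_i F i) = \sum_i adjmx (F i).
Proof.
apply/matrixP=> i j; rewrite adjmxE !summxE rmorph_sum; apply: eq_bigr=> k _.
by rewrite adjmxE.
Qed.

Lemma adjmx0 p q : adjmx (0 : 'M[C]_(p,q)) = 0.
Proof. by apply/matrixP=> i j; rewrite !(adjmxE, mxE) conjC0. Qed.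

Lemma adjmx_scalar p a : adjmx (a%:M : 'M[C]_p) = a^*%:M.
Proof.
apply/matrixP=> i j; rewrite !(adjmxE, mxE) [j == i]eq_sym.
by case: (i == j); rewrite ?mulr1n ?mulr0n ?conjC0.
Qed.

Lemma posop_conj p q (M : 'M[C]_(p,q)) (X : 'M[C]_q) :
  posop X -> posop (M *m X *m adjmx M).
Proof.
case=> hX hq; split.
  by rewrite !adjmx_mul adjmxK hX mulmxA.
move=> v; have := hq (adjmx M *m v).
by rewrite adjmx_mul adjmxK !mulmxA.
Qed.

Lemma posop_add p (A B : 'M[C]_p) : posop A -> posop B -> posop (A + B).
Proof.
case=> hA qA [hB qB]; split; first by rewrite adjmxD hA hB.
by move=> v; rewrite mulmxDr mulmxDl mxE addr_ge0.
Qed.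

Lemma posop0 p : posop (0 : 'M[C]_p).
Proof. by split; [rewrite adjmx0 | move=> v; rewrite mulmx0 mul0mx mxE]. Qed.

Lemma posop_sum p (I : finType) (F : I -> 'M[C]_p) :
  (forall i, posop (F i)) -> posop (\sum_i F i).
Proof.
move=> h; elim/big_rec: _ => [|i A _ hA]; first exact: posop0.
exact: posop_add.
Qed.

Lemma qf_cV p (v : 'cV[C]_p) : (adjmx v *m v) 0 0 = \sum_k v k 0 * (v k 0)^*.
Proof. by rewrite mxE; apply: eq_bigr=> k _; rewrite adjmxE mulrC. Qed.

Lemma qf_ge0 p (v : 'cV[C]_p) : 0 <= (adjmx v *m v) 0 0.
Proof. by rewrite qf_cV sumr_ge0 // => k _; exact: mul_conjC_ge0. Qed.

Lemma qf_gt0 p (v : 'cV[C]_p) : v != 0 -> 0 < (adjmx v *m v) 0 0.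
Proof.
move=> hv; have [k hk] : exists k, v k 0 != 0.
  apply/existsP; apply: contraR hv; rewrite negb_exists => /forallP h.
  by apply/eqP/matrixP=> i j; rewrite ord1 mxE; apply/eqP/negbNE/h.
rewrite qf_cV (bigD1 k) //= ltr_pwDl ?mul_conjC_gt0 //.
by rewrite sumr_ge0 // => i _; exact: mul_conjC_ge0.
Qed.

Lemma qf_scalar p (v : 'cV[C]_p) a :
  (adjmx v *m a%:M *m v) 0 0 = a * (adjmx v *m v) 0 0.
Proof. by rewrite mul_mx_scalar -scalemxAl mxE. Qed.

Lemma posdef_posop p (A : 'M[C]_p) : posdef A -> posop A.
Proof.
case=> h q; split=> // v; have [->|hv] := eqVneq v 0.
  by rewrite mulmx0 mxE.
exact/ltW/q.
Qed.

Lemma posop_scalar p a : 0 <= a -> posop (a%:M : 'M[C]_p).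
Proof.
move=> ha; split; first by rewrite adjmx_scalar geC0_conj.
by move=> v; rewrite qf_scalar mulr_ge0 // qf_ge0.
Qed.

Lemma posdef_scalar p a : 0 < a -> posdef (a%:M : 'M[C]_p).
Proof.
move=> ha; split; first by rewrite adjmx_scalar geC0_conj // ltW.
by move=> v hv; rewrite qf_scalar mulr_gt0 // qf_gt0.
Qed.

End Gen.

Section Gen2.
Variable C : numClosedFieldType.

Lemma sum_tens m n (F : 'I_(m * n) -> C) :
  \sum_u F u = \sum_i \sum_j F (mxtens_index (i, j)).
Proof.
rewrite pair_big /=; apply: (reindex (fun p => mxtens_index (p.1, p.2))).
exists (@mxtens_unindex m n)=> u _ /=; first by case: u=> ? ?; rewrite mxtens_indexK.
exact: (mxtens_unindexK u).
Qed.

Lemma tens1_mulE k p q (M : 'M[C]_(p,q)) r (Y : 'M[C]_(k * q, r)) a i w :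
  ((1%:M *t M) *m Y) (mxtens_index (a, i)) w
  = \sum_i' M i i' * Y (mxtens_index (a, i')) w.
Proof.
rewrite mxE sum_tens (bigD1 a) //= [X in _ + X]big1 ?addr0.
  by apply: eq_bigr=> i' _; rewrite tensmxE mxE eqxx mulr1n mul1r.
move=> a' ha'; apply: big1=> i' _.
by rewrite tensmxE mxE eq_sym (negbTE ha') mulr0n !mul0r.
Qed.

Lemma mul_tens1E k p q (N : 'M[C]_(p,q)) r (Y : 'M[C]_(r, k * p)) u b j :
  (Y *m (1%:M *t N)) u (mxtens_index (b, j))
  = \sum_j' Y u (mxtens_index (b, j')) * N j' j.
Proof.
rewrite mxE sum_tens (bigD1 b) //= [X in _ + X]big1 ?addr0.
  by apply: eq_bigr=> i' _; rewrite tensmxE mxE eqxx mulr1n mul1r.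
move=> a' ha'; apply: big1=> i' _.
by rewrite tensmxE mxE (negbTE ha') mulr0n !mul0r mulr0.
Qed.

Lemma adjmx_tens1 k p q (M : 'M[C]_(p,q)) :
  adjmx (1%:M *t M : 'M_(k * p, k * q)) = 1%:M *t adjmx M.
Proof.
apply/matrixP=> u w; case: (mxtens_indexP u)=> a i; case: (mxtens_indexP w)=> b j.
rewrite adjmxE !tensmxE !mxE [b == a]eq_sym.
by case: (a == b); rewrite ?mul1r ?mul0r ?conjC0.
Qed.

Lemma ampl_conj k p q (M : 'M[C]_(p,q)) (X : 'M[C]_(k * q)) :
  ampl (fun Y => M *m Y *m adjmx M) X
  = (1%:M *t M) *m X *m adjmx (1%:M *t M).
Proof.
apply/matrixP=> u w; case: (mxtens_indexP u)=> a i; case: (mxtens_indexP w)=> b j.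
rewrite adjmx_tens1 mul_tens1E !mxE !mxtens_indexK /=.
apply: eq_bigr=> j' _; rewrite tens1_mulE mxE; congr (_ * _); apply: eq_bigr=> i' _; by rewrite mxE.
Qed.

Lemma ampl_comp k n m p (f : 'M[C]_n -> 'M[C]_m) (g : 'M[C]_m -> 'M[C]_p)
  (X : 'M[C]_(k * n)) :
  ampl (fun Y => g (f Y)) X = ampl g (ampl f X).
Proof.
apply/matrixP=> u w; rewrite !mxE; congr (g _ _ _).
by apply/matrixP=> i j; rewrite !mxE !mxtens_indexK.
Qed.

Lemma ampl_sum k n m (I : finType) (f : I -> 'M[C]_n -> 'M[C]_m)
  (X : 'M[C]_(k * n)) :
  ampl (fun Y => \sum_i f i Y) X = \sum_i ampl (f i) X.
Proof. by apply/matrixP=> u w; rewrite !mxE !summxE; apply: eq_bigr=> i _; rewrite mxE. Qed.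

Lemma linmap_conj p q (M : 'M[C]_(p,q)) : linmap (fun Y => M *m Y *m adjmx M).
Proof. by move=> a A B; rewrite mulmxDr mulmxDl -scalemxAr -scalemxAl. Qed.

Lemma cp_conj p q (M : 'M[C]_(p,q)) :
  completely_positive (fun Y => M *m Y *m adjmx M).
Proof.
split; first exact: linmap_conj.
by move=> k X hX; rewrite ampl_conj; exact: posop_conj.
Qed.

Lemma cp_comp n m p (f : 'M[C]_n -> 'M[C]_m) (g : 'M[C]_m -> 'M[C]_p) :
  completely_positive f -> completely_positive g ->
  completely_positive (fun Y => g (f Y)).
Proof.
case=> lf pf [lg pg]; split.
  by move=> a A B; rewrite lf lg.
by move=> k X hX; rewrite ampl_comp; apply: pg; apply: pf.
Qed.

Lemma cp_sum n m (I : finType) (f : I -> 'M[C]_n -> 'M[C]_m) :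
  (forall i, completely_positive (f i)) ->
  completely_positive (fun Y => \sum_i f i Y).
Proof.
move=> h; split.
  move=> a A B; rewrite scaler_sumr -big_split; apply: eq_bigr=> i _.
  by case: (h i)=> l _; rewrite l.
move=> k X hX; rewrite ampl_sum; apply: posop_sum=> i.
by case: (h i)=> _ ; apply.
Qed.

End Gen2.

Section Span.
Variable C : numClosedFieldType.

Definition Qm n (w : 'cV[C]_n) := w *m adjmx w.

Lemma polar_scal (ii xa xb ya yb : C) : ii * ii = -1 ->
  2 * (xa * yb) = (xa + ya) * (xb + yb) + ii * ((xa + ii * ya) * (xb + - ii * yb))
     - (1 + ii) * (xa * xb + ya * yb).
Proof.
move=> h; apply/eqP; rewrite -subr_eq0; apply/eqP.
transitivity ((ii * ii + 1) * (xa * yb - ya * xb + ii * ya * yb)); first by ring.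
by rewrite h addNr mul0r.
Qed.

Lemma polar n (x y : 'cV[C]_n) :
  (2 : C) *: (x *m adjmx y) =
  Qm (x + y) + 'i *: Qm (x + 'i *: y) - (1 + 'i) *: (Qm x + Qm y).
Proof.
apply/matrixP=> a b; rewrite !(mxE, big_ord1, adjmxE) !rmorphD !rmorphM /= conjCi.
exact: (polar_scal _ _ _ _ (mulCii C)).
Qed.

Lemma tr1 (A : 'M[C]_1) : \tr A = A 0 0.
Proof. by rewrite /mxtrace big_ord1. Qed.

Lemma span_states n (phi : 'M[C]_n -> C) :
  (forall a A B, phi (a *: A + B) = a * phi A + phi B) ->
  (forall rho, is_state rho -> phi rho = 0) -> forall A, phi A = 0.
Proof.
move=> lin hs.
have phi0 : phi 0 = 0.
  by have := lin (-1) 0 0; rewrite scaler0 addr0 mulN1r addNr.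
have phiZ a A : phi (a *: A) = a * phi A.
  by have := lin a A 0; rewrite addr0 phi0 addr0.
have phiD A B : phi (A + B) = phi A + phi B.
  by have := lin 1 A B; rewrite scale1r mul1r.
have phiB A B : phi (A - B) = phi A - phi B.
  by have := lin (-1) B A; rewrite scaleN1r mulN1r addrC [_ + phi A]addrC.
have phiQ w : phi (Qm w) = 0.
  have [->|hw] := eqVneq w 0; first by rewrite /Qm mul0mx phi0.
  have ht := qf_gt0 hw; set t := (adjmx w *m w) 0 0 in ht.
  have tn0 : t != 0 by rewrite gt_eqF.
  have -> : Qm w = t *: (w *m t^-1%:M *m adjmx w).
    by rewrite mul_mx_scalar -scalemxAl scalerA mulfV // scale1r.
  rewrite phiZ hs ?mulr0 //; split.
    by apply: posop_conj; apply: posop_scalar; rewrite invr_ge0 ltW.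
  by rewrite mxtrace_mulC mulmxA mul_mx_scalar tr1 mxE mulVf.
have phiP (x y : 'cV[C]_n) : phi (x *m adjmx y) = 0.
  have h2 : (2 : C) != 0 by rewrite pnatr_eq0.
  apply: (mulfI h2); rewrite -phiZ polar phiB phiD phiZ !phiQ.
  by rewrite phiZ phiD !phiQ !(mulr0, addr0, subr0).
have phi_sum (I : finType) (F : I -> 'M[C]_n) : phi (\sum_i F i) = \sum_i phi (F i).
  exact: (big_morph phi phiD phi0).
move=> A; rewrite (matrix_sum_delta A) phi_sum big1 // => i _.
rewrite phi_sum big1 // => j _; rewrite phiZ.
have -> : delta_mx i j = (delta_mx i 0 : 'cV[C]_n) *m adjmx (delta_mx j 0 : 'cV[C]_n).
  apply/matrixP=> a b; rewrite !(mxE, big_ord1, adjmxE) eqxx !andbT.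
  by case: (a == i); case: (b == j); rewrite /= ?mulr1n ?mulr0n ?conjC1 ?conjC0 ?mul1r ?mul0r ?mulr0.
by rewrite phiP mulr0.
Qed.

End Span.

Section Constr.
Variable C : numClosedFieldType.

Lemma sum_pick (T : finType) (a : T) (F : T -> C) :
  \sum_u (a == u)%:R * F u = F a.
Proof.
rewrite (bigD1 a) //= eqxx mul1r big1 ?addr0 // => u hu.
by rewrite eq_sym (negbTE hu) mul0r.
Qed.

Lemma sum_pickr (T : finType) (a : T) (F : T -> C) :
  \sum_u F u * (a == u)%:R = F a.
Proof. by rewrite -[RHS]sum_pick; apply: eq_bigr=> u _; rewrite mulrC. Qed.

Variables (n m : nat).

Definition Lm (c : 'I_m) : 'M[C]_(n, n * m) :=
  \matrix_(i, u) (mxtens_index (i, c) == u)%:R.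

Lemma LmE c i u : Lm c i u = (mxtens_index (i, c) == u)%:R.
Proof. by rewrite mxE. Qed.

Lemma LY c p (Y : 'M[C]_(n * m, p)) i j : (Lm c *m Y) i j = Y (mxtens_index (i, c)) j.
Proof.
rewrite mxE; under eq_bigr do rewrite LmE; exact: sum_pick.
Qed.

Lemma YLa c p (Y : 'M[C]_(p, n * m)) i j :
  (Y *m adjmx (Lm c)) i j = Y i (mxtens_index (j, c)).
Proof.
rewrite mxE; under eq_bigr do rewrite adjmxE LmE conjC_nat; exact: sum_pickr.
Qed.

Lemma LYL c c' (Y : 'M[C]_(n * m)) i j :
  (Lm c *m Y *m adjmx (Lm c')) i j = Y (mxtens_index (i, c)) (mxtens_index (j, c')).
Proof. by rewrite YLa LY. Qed.

Lemma LL c c' : Lm c *m adjmx (Lm c') = (c == c')%:R *: 1%:M.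
Proof.
apply/matrixP=> i j; rewrite -[Lm c]mulmx1 LYL !mxE.
rewrite (can_eq (@mxtens_indexK _ _)) xpair_eqE.
by case: (i == j); case: (c == c'); rewrite ?mulr1 ?mulr0 ?mul1r ?mul0r.
Qed.

Lemma LLd c : Lm c *m adjmx (Lm c) = 1%:M.
Proof. by rewrite LL eqxx scale1r. Qed.

Definition PT (Y : 'M[C]_(n * m)) : 'M[C]_n := \sum_c Lm c *m Y *m adjmx (Lm c).

Lemma PT_ptrA Y : PT Y = ptrA Y.
Proof. by apply/matrixP=> i j; rewrite summxE mxE; apply: eq_bigr=> c _; rewrite LYL. Qed.

Lemma tr_ptrA (Y : 'M[C]_(n * m)) : \tr (ptrA Y) = \tr Y.
Proof.
rewrite /mxtrace sum_tens; apply: eq_bigr=> i _; by rewrite mxE.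
Qed.

Lemma PT_tens (A : 'M[C]_n) (xi : 'M[C]_m) : PT (A *t xi) = \tr xi *: A.
Proof.
apply/matrixP=> i j; rewrite summxE !mxE /mxtrace mulr_suml.
by apply: eq_bigr=> c _; rewrite LYL tensmxE mulrC.
Qed.


Lemma delta_cV p (i j : 'I_p) :
  delta_mx i j = (delta_mx i 0 : 'cV[C]_p) *m adjmx (delta_mx j 0 : 'cV[C]_p).
Proof.
apply/matrixP=> a b; rewrite !(mxE, big_ord1, adjmxE) eqxx !andbT.
by case: (a == i); case: (b == j); rewrite /= ?mulr1n ?mulr0n ?conjC1 ?conjC0 ?mul1r ?mul0r ?mulr0.
Qed.

Lemma posop_delta p (i : 'I_p) : posop (delta_mx i i : 'M[C]_p).
Proof.
rewrite delta_cV.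
have -> : forall e : 'cV[C]_p, e *m adjmx e = e *m (1%:M : 'M_1) *m adjmx e.
  by move=> e; rewrite mulmx1.
apply: posop_conj.
by apply: posop_scalar; exact: ler01.
Qed.

Lemma posdef_sum_conj p q (J : finType) (M : J -> 'M[C]_(p, q)) (P : J -> 'M[C]_q) :
  (forall j, posdef (P j)) ->
  (forall v : 'cV[C]_p, v != 0 -> exists j, adjmx (M j) *m v != 0) ->
  posdef (\sum_j M j *m P j *m adjmx (M j)).
Proof.
move=> hP hv.
have hp : posop (\sum_j M j *m P j *m adjmx (M j)).
  by apply: posop_sum=> j; apply: posop_conj; apply: posdef_posop.
split; first by case: hp.
move=> v /hv [j0 hj0].
have E j : (adjmx v *m (M j *m P j *m adjmx (M j)) *m v) 0 0
   = (adjmx (adjmx (M j) *m v) *m P j *m (adjmx (M j) *m v)) 0 0.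
  by rewrite adjmx_mul adjmxK !mulmxA.
rewrite mulmx_sumr mulmx_suml summxE (bigD1 j0) //= E.
have h1 : 0 < (adjmx (adjmx (M j0) *m v) *m P j0 *m (adjmx (M j0) *m v)) 0 0.
  by case: (hP j0)=> _; apply.
apply: (lt_le_trans h1); rewrite lerDl sumr_ge0 // => j _; rewrite E.
by case: (posdef_posop (hP j))=> _; apply.
Qed.

End Constr.

Section Constr2.
Variables (C : numClosedFieldType) (n : nat) (X : finType).
Variable I : X -> 'M[C]_n -> 'M[C]_n.

Local Notation m := #|X|.

Definition Kx (x : X) : 'M[C]_(n * m, n) := adjmx (@Lm C n m (enum_rank x)).

Lemma KxE x u j : Kx x u j = (mxtens_index (j, enum_rank x) == u)%:R.
Proof. by rewrite /Kx adjmxE LmE conjC_nat. Qed.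

Definition Ech (Y : 'M[C]_(n * m)) : 'M[C]_(n * m) :=
  \sum_x Kx x *m I x (PT Y) *m adjmx (Kx x).

Definition ZC (x : X) : 'M[C]_m := delta_mx (enum_rank x) (enum_rank x).

Definition xiC : 'M[C]_m := (m%:R^-1)%:M.

Lemma cp_PT : completely_positive (@PT C n m).
Proof. by apply: cp_sum=> c; apply: cp_conj. Qed.

Lemma cp_Ech : (forall x, completely_positive (I x)) -> completely_positive Ech.
Proof.
move=> h; apply: (cp_sum (f := fun x Y => Kx x *m I x (PT Y) *m adjmx (Kx x))) => x.
apply: (cp_comp (f := fun Y => I x (PT Y)) (g := fun B => Kx x *m B *m adjmx (Kx x))).
  by apply: (cp_comp (f := @PT C n m)); [exact: cp_PT | exact: h].
exact: cp_conj.
Qed.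

Lemma tp_Ech : (forall A, \sum_x \tr (I x A) = \tr A) -> forall Y, \tr (Ech Y) = \tr Y.
Proof.
move=> h Y; rewrite /Ech raddf_sum /= -[RHS]tr_ptrA -PT_ptrA -h.
apply: eq_bigr=> x _; rewrite mxtrace_mulC mulmxA /Kx adjmxK LLd mul1mx //.
Qed.


Lemma tensZ_Kx x y : (1%:M *t ZC x) *m Kx y = (x == y)%:R *: Kx y.
Proof.
apply/matrixP=> u j; case: (mxtens_indexP u)=> a e.
rewrite tens1_mulE mxE KxE.
under eq_bigr do rewrite KxE mxE.
rewrite (can_eq (@mxtens_indexK _ _)) xpair_eqE.
have [he|he] := eqVneq e (enum_rank x).
  rewrite (bigD1 (enum_rank x)) //= big1 ?addr0; last by move=> e' /negbTE ->; rewrite mul0r.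
  rewrite he eqxx mul1r (can_eq (@mxtens_indexK _ _)) xpair_eqE (can_eq enum_rankK) [y == x]eq_sym.
  by case: (j == a); case: (x == y); rewrite /= ?mulr1 ?mulr0 ?mul1r ?mul0r.
rewrite big1; last by move=> e' _; rewrite /= mul0r.
have [hxy|] := eqVneq x y; last by rewrite mul0r.
by rewrite -hxy [enum_rank x == e]eq_sym (negbTE he) andbF mulr0.
Qed.

Lemma PT_K x (B : 'M[C]_n) : PT (Kx x *m B *m adjmx (Kx x)) = B.
Proof.
rewrite /PT /Kx adjmxK.
have E c : @Lm C n #|X| c *m (adjmx (@Lm C n #|X| (enum_rank x)) *m B *m @Lm C n #|X| (enum_rank x)) *m adjmx (@Lm C n #|X| c)
   = (c == enum_rank x)%:R *: ((enum_rank x == c)%:R *: B).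
  rewrite !mulmxA LL -!mulmxA LL !scalemx1 mul_scalar_mx mul_mx_scalar //.
rewrite (eq_bigr _ (fun c _ => E c)) (bigD1 (enum_rank x)) //= eqxx !scale1r.
by rewrite big1 ?addr0 // => c /negbTE ->; rewrite scale0r.
Qed.

Lemma nonzero_entry p (v : 'cV[C]_p) : v != 0 -> exists k, v k 0 != 0.
Proof.
move=> hv; apply/existsP; apply: contraR hv; rewrite negb_exists => /forallP h.
by apply/eqP/matrixP=> i j; rewrite ord1 mxE; apply/eqP/negbNE/h.
Qed.

Lemma sumZ : \sum_x ZC x = 1%:M.
Proof.
apply/matrixP=> a b; rewrite summxE mxE -[a]enum_valK -[b]enum_valK.
under eq_bigr do rewrite /ZC mxE !(can_eq enum_rankK).
rewrite (can_eq enum_rankK) (bigD1 (enum_val a)) //= eqxx big1 ?addr0.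
  by rewrite [enum_val b == _]eq_sym.
by move=> y /negbTE; rewrite eq_sym => ->.
Qed.

Lemma tr_xiC (x0 : X) : \tr xiC = 1.
Proof.
have hm : (0 < #|X|)%N by apply/card_gt0P; exists x0.
by rewrite /xiC mxtrace_scalar -[_ *+ #|X|]mulr_natr mulVf // pnatr_eq0 -lt0n.
Qed.

Lemma xiC_posdef (x0 : X) : posdef xiC.
Proof.
have hm : (0 < #|X|)%N by apply/card_gt0P; exists x0.
by apply: posdef_scalar; rewrite invr_gt0 ltr0n.
Qed.

Lemma xiC_state (x0 : X) : is_state xiC.
Proof. by split; [exact: posdef_posop (xiC_posdef x0) | exact: tr_xiC]. Qed.

Lemma impl_Ech (x0 : X) x (A : 'M[C]_n) :
  I x A = ptrA ((1%:M *t ZC x) *m Ech (A *t xiC)).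
Proof.
rewrite /Ech PT_tens (tr_xiC x0) scale1r mulmx_sumr.
under eq_bigr do rewrite !mulmxA tensZ_Kx -!scalemxAl.
rewrite (bigD1 x) //= eqxx scale1r big1 ?addr0.
  by rewrite -PT_ptrA PT_K.
by move=> y; rewrite eq_sym => /negbTE ->; rewrite scale0r.
Qed.

Lemma third_Ech (x0 : X) :
  (forall rho x, fullrank_state rho -> posdef (I x rho)) ->
  (forall Y, \tr (Ech Y) = \tr Y) -> third_law_channel Ech.
Proof.
move=> hI htp Y [[hpY trY] pdY].
have hPT : fullrank_state (PT Y).
  have pd : posdef (PT Y).
    apply: (posdef_sum_conj (M := @Lm C n #|X|) (P := fun _ => Y)) => // v hv.
    exists (enum_rank x0); apply: contra hv => /eqP h.
    by rewrite -(mul1mx v) -(LLd C n (enum_rank x0)) -mulmxA h mulmx0.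
  split=> //; split; first exact: posdef_posop.
  by rewrite PT_ptrA tr_ptrA.
have pd : posdef (Ech Y).
  apply: (posdef_sum_conj (M := Kx) (P := fun x => I x (PT Y))).
    by move=> x; apply: hI.
  move=> v /nonzero_entry [u hu]; case: (mxtens_indexP u) hu => a d hu.
  exists (enum_val d); rewrite /Kx adjmxK; apply/eqP=> /matrixP /(_ a 0).
  by rewrite LY enum_valK mxE; apply/eqP.
split=> //; split; first exact: posdef_posop.
by rewrite htp.
Qed.

End Constr2.


Unset Implicit Arguments.

Theorem mainTheorem13 (R : realType) (n : nat) (hn : (2 <= n)%N)
  (X : finType) (E : X -> 'M[R[i]]_n) (I : X -> 'M[R[i]]_n -> 'M[R[i]]_n) :
  observable E -> completely_unsharp E -> instrument E I ->
  (forall (rho : 'M[R[i]]_n) (x : X), fullrank_state rho -> posdef (I x rho)) ->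
  exists (m : nat) (xi : 'M[R[i]]_m) (Ech : 'M[R[i]]_(n * m) -> 'M[R[i]]_(n * m))
         (Z : X -> 'M[R[i]]_m),
    [/\ meas_scheme xi Ech Z, third_law_scheme xi Ech & implements xi Ech Z I].
Proof.
move=> [hE0 hEp hEp1 hsum] hcu [hcp htr] hpd.
have [x0 _] : exists x0 : X, True.
  case: (pickP (@predT X)) => [x0 _|h0]; first by exists x0.
  have i0 : 'I_n by exists 0%N; apply: leq_trans hn.
  move: hsum; rewrite big_pred0 // => /matrixP /(_ i0 i0).
  by rewrite !mxE eqxx /= => /eqP; rewrite eq_sym oner_eq0.
have htp : forall A, \sum_x \tr (I x A) = \tr A.
  move=> A; apply/eqP; rewrite -subr_eq0; apply/eqP; move: A.
  apply: (span_states (phi := fun A => \sum_x \tr (I x A) - \tr A)).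
    move=> a A B /=.
    have -> : \sum_x \tr (I x (a *: A + B)) = a * \sum_x \tr (I x A) + \sum_x \tr (I x B).
      rewrite mulr_sumr -big_split; apply: eq_bigr=> x _.
      by case: (hcp x)=> l _; rewrite l mxtraceD mxtraceZ.
    rewrite mxtraceD mxtraceZ; ring.
  move=> rho hrho /=; apply/eqP; rewrite subr_eq0; apply/eqP.
  under eq_bigr do rewrite htr //.
  by rewrite -raddf_sum /= -mulmx_suml hsum mul1mx.
exists #|X|, (xiC _ X), (Ech I), (fun x => ZC _ x); split.
- split; first exact: (xiC_state _ x0).
  + by split; [exact: cp_Ech | exact: tp_Ech].
  + by move=> x; exact: posop_delta.
  exact: sumZ.
- split; first exact: (xiC_posdef _ x0).
  by apply: third_Ech => //; exact: tp_Ech.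
- by move=> x A; exact: (impl_Ech I x0 x A).
Qed.
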